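(* The class of graphs with no cycle with a unique chord is 2-cutset-safe.
   Context: All graphs are finite and simple. A cycle in $G$ is a set of distinct vertices $c_1,\dots,c_k$ with $c_1c_2,\dots,c_{k-1}c_k,c_kc_1\in E(G)$; any other edge of $G$ between two of these vertices is a chord. A graph contains a cycle with a unique chord if it has a cycle with exactly one chord; the class in question consists of graphs in which every cycle has no chord or at least two chords. A connected graph $G$ has a 1-cutset if there is $x$ with $G\setminus\{x\}$ having at least two components. A 2-cutset is a pair $u,v$ with $G\setminus\{u,v\}$ not connected. For a component $C$ of $G\setminus\{u,v\}$, $\operatorname{cl}(C)$ is obtained from the subgraph induced by $C\cup\{u,v\}$ by adding the edge $uv$, and $\operatorname{cl}^*(C)$ from $\operatorname{cl}(C)$ by subdividing $uv$ exactly once. A hereditary class $\mathcal{F}$ is 2-cutset-safe if for every $G\in\mathcal{F}$ with no 1-cutset, every 2-cutset $\{u,v\}$ of $G$ and every component $C$ of $G\setminus\{u,v\}$, either $\operatorname{cl}(C)\in\mathcal{F}$ or $\operatorname{cl}^*(C)\in\mathcal{F}$. *)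

(* Defs.v *)
From mathcomp Require Import all_boot.
Set Implicit Arguments. Unset Strict Implicit. Unset Printing Implicit Defensive.

Record sgraph := SGraph {
  vert :> finType;
  adj : rel vert;
  adj_sym : symmetric adj;
  adj_irr : irreflexive adj }.

Section Graphs.
Variable G : sgraph.

Definition is_cycle (c : seq G) : bool :=
  [&& uniq c, 2 < size c & cycle (@adj G) c].

Definition chords (c : seq G) : {set {set G}} :=
  [set [set x; y] | x in c, y in c &
     [&& adj x y, next c x != y & next c y != x]].

Definition adj_minus (X : {set G}) : rel G :=
  [rel a b | [&& adj a b, a \notin X & b \notin X]].

Definition disconnected_minus (X : {set G}) : Prop :=
  exists x y : G, [/\ x \notin X, y \notin X & ~~ connect (adj_minus X) x y].

Definition has_1cutset : Prop := exists x : G, disconnected_minus [set x].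

Definition two_cutset (u v : G) : Prop := u != v /\ disconnected_minus [set u; v].

Definition component (X C : {set G}) : Prop :=
  exists2 x : G, x \notin X & C = [set y | (y \notin X) && connect (adj_minus X) x y].

Definition ind_vert (S : {set G}) : finType := {x : G | x \in S}.

Definition ind_adj (S : {set G}) : rel (ind_vert S) :=
  fun a b => adj (val a) (val b).

Lemma ind_adj_sym S : symmetric (@ind_adj S).
Proof. by move=> a b; rewrite /ind_adj adj_sym. Qed.

Lemma ind_adj_irr S : irreflexive (@ind_adj S).
Proof. by move=> a; rewrite /ind_adj adj_irr. Qed.

Definition induced (S : {set G}) : sgraph :=
  @SGraph (ind_vert S) (@ind_adj S) (@ind_adj_sym S) (@ind_adj_irr S).

(* induced subgraph on C ∪ {u,v} plus the edge uv *)
Definition cl_adj (u v : G) (C : {set G}) : rel (ind_vert (C :|: [set u; v])) :=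
  fun a b => (val a != val b) &&
             (adj (val a) (val b) || ([set val a; val b] == [set u; v])).

Lemma cl_adj_sym u v C : symmetric (@cl_adj u v C).
Proof.
move=> a b; rewrite /cl_adj eq_sym adj_sym.
by rewrite [[set val b; val a]]setUC.
Qed.

Lemma cl_adj_irr u v C : irreflexive (@cl_adj u v C).
Proof. by move=> a; rewrite /cl_adj eqxx. Qed.

Definition cl (u v : G) (C : {set G}) : sgraph :=
  @SGraph (ind_vert (C :|: [set u; v])) (@cl_adj u v C)
          (@cl_adj_sym u v C) (@cl_adj_irr u v C).

(* induced subgraph on C ∪ {u,v} plus a new vertex (None) adjacent
   exactly to u and v, i.e. the edge uv subdivided once *)
Definition clstar_adj (u v : G) (C : {set G})
  : rel (option (ind_vert (C :|: [set u; v]))) :=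
  fun a b => match a, b with
             | Some x, Some y => adj (val x) (val y)
             | None, Some y => val y \in [set u; v]
             | Some x, None => val x \in [set u; v]
             | None, None => false
             end.

Lemma clstar_adj_sym u v C : symmetric (@clstar_adj u v C).
Proof. by move=> [a|] [b|] //=; rewrite adj_sym. Qed.

Lemma clstar_adj_irr u v C : irreflexive (@clstar_adj u v C).
Proof. by move=> [a|] //=; rewrite adj_irr. Qed.

Definition clstar (u v : G) (C : {set G}) : sgraph :=
  @SGraph (option (ind_vert (C :|: [set u; v]))) (@clstar_adj u v C)
          (@clstar_adj_sym u v C) (@clstar_adj_irr u v C).

End Graphs.

Definition no_cycle_unique_chord (G : sgraph) : Prop :=
  forall c : seq G, is_cycle c -> #|chords c| != 1.

Definition hereditary (P : sgraph -> Prop) : Prop :=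
  forall (G : sgraph) (S : {set G}), P G -> P (induced S).

Definition two_cutset_safe (P : sgraph -> Prop) : Prop :=
  hereditary P /\
  forall G : sgraph, P G -> ~ has_1cutset G ->
  forall u v : G, two_cutset u v ->
  forall C : {set G}, component [set u; v] C ->
  P (cl u v C) \/ P (clstar u v C).

(* Main.v *)
Require Import Defs.
From mathcomp Require Import all_boot zify.
Set Implicit Arguments. Unset Strict Implicit. Unset Printing Implicit Defensive.

Lemma chordsP (G : sgraph) (c : seq G) X :
  reflect (exists x y, [/\ x \in c, y \in c, adj x y,
             (next c x != y) && (next c y != x) & X = [set x; y]])
          (X \in chords c).
Proof.
apply: (iffP imset2P) => [[x y xc] | [x [y [xc yc a n ->]]]].
  by rewrite inE => /andP[yc /andP[a n]] ->; exists x, y.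
by exists x y => //; rewrite inE yc a n.
Qed.

Lemma set2_imset (A B : finType) (f : A -> B) x y :
  f @: [set x; y] = [set f x; f y].
Proof. by rewrite imsetU !imset_set1. Qed.

Lemma map_cycle_chords (H G : sgraph) (f : H -> G) (c : seq H) :
  injective f -> {in c &, forall a b, adj (f a) (f b) = adj a b} ->
  is_cycle c -> is_cycle (map f c) /\ #|chords (map f c)| = #|chords c|.
Proof.
move=> fi fa /and3P[uc sc cc].
have uc' : uniq (map f c) by rewrite map_inj_uniq.
split.
  apply/and3P; split => //; first by rewrite size_map.
  rewrite cycle_map; apply: (sub_in_cycle (P := mem c)) cc; last exact/allP.
  by move=> a b /= ac bc; rewrite /= fa.
suff -> : chords (map f c) = [set f @: X | X : {set H} in chords c].
  by rewrite card_imset //; apply: imset_inj.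
apply/setP => X; apply/chordsP/imsetP.
  move=> [x' [y' [/mapP[x xc ->] /mapP[y yc ->] a n ->]]].
  exists [set x; y]; last by rewrite set2_imset.
  apply/chordsP; exists x, y; split => //; first by rewrite -fa.
  by move: n; rewrite !next_map // !(inj_eq fi).
move=> [Y /chordsP [x [y [xc yc a n ->]]] ->].
exists (f x), (f y); rewrite set2_imset; split => //; try exact: map_f.
  by rewrite fa.
by rewrite !next_map // !(inj_eq fi).
Qed.

Lemma rot_cycle_chords (G : sgraph) (c : seq G) n :
  is_cycle c -> is_cycle (rot n c) /\ chords (rot n c) = chords c.
Proof.
move=> /and3P[uc sc cc]; split.
  by apply/and3P; rewrite rot_uniq size_rot rot_cycle.
apply/setP => X; apply/chordsP/chordsP => -[x [y [xc yc a nn ->]]];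
  exists x, y; move: xc yc nn; rewrite !mem_rot !next_rot //.
Qed.


Lemma mkseq_cons T (g : nat -> T) n : mkseq g n.+1 = g 0 :: mkseq (fun k => g k.+1) n.
Proof.
elim: n => [//|n IH]; by rewrite mkseqS IH mkseqS.
Qed.

Lemma mkseq_split T (g : nat -> T) n :
  mkseq g n.+2 = g 0 :: rcons (mkseq (fun k => g k.+1) n) (g n.+1).
Proof. by rewrite mkseqS mkseq_cons. Qed.

Definition walk (G : sgraph) (S : {set G}) (a b : G) n (g : nat -> G) :=
  [/\ g 0 = a, g n = b, forall i, i < n -> adj (g i) (g i.+1)
    & forall i, 0 < i < n -> g i \in S].

Lemma induced_path (G : sgraph) (S : {set G}) (a b : G) :
  a != b -> ~~ adj a b -> forall n g, walk S a b n g ->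
  exists q : seq G, [/\ q != [::], uniq (a :: rcons q b), all (mem S) q,
    path (@adj G) a (rcons q b) &
    forall i j, i < (size q).+2 -> j < (size q).+2 ->
      adj (nth a (a :: rcons q b) i) (nth a (a :: rcons q b) j) ->
      i = j.+1 \/ j = i.+1].
Proof.
move=> nab nadj n; elim/ltn_ind: n => n IH g [g0 gn gadj gS].
case: (boolP [exists i : 'I_n.+1, [exists j : 'I_n.+1, (i < j) &&
           ((g i == g j) || ((i.+1 < j) && adj (g i) (g j)))]]).
  case/existsP => -[i /= ilt] /existsP [[j /= jlt]] /= /andP[ij cond].
  pose d := if g i == g j then j - i else (j - i).-1.
  have dpos : 0 < d.
    rewrite /d; case: eqP => e; first by lia.
    by move: cond; rewrite (introF eqP e) /= => /andP[h _]; lia.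
  have dle : d <= j - i by rewrite /d; case: ifP => _; lia.
  pose g' k := if k <= i then g k else g (k + d).
  apply: (IH (n - d) _ g'); first by lia.
  have Hend : g' (n - d) = b.
    rewrite /g'; case: ifP => h; last by rewrite subnK //; lia.
    have eij : g i == g j.
      case: eqP => // e; move: h cond; rewrite /d (introF eqP e) /= => h /andP[h2 _]; lia.
    have dE : d = j - i by rewrite /d eij.
    have jn : j = n by rewrite dE in h; lia.
    have -> : n - d = i by rewrite dE in h *; lia.
    by rewrite (eqP eij) jn.
  split => //.
  - move=> k kn; rewrite /g'.
    case: (ltngtP k i) => [ki | ik | eki]; last subst k.
    + by apply: gadj; lia.
    + by rewrite addSn; apply: gadj; lia.
    + case: (g i =P g j) => e.
        have dE : d = j - i by rewrite /d e eqxx.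
        rewrite e dE; have -> : i.+1 + (j - i) = j.+1 by lia.
        by apply: gadj; rewrite dE in kn; lia.
      have dE : d = (j - i).-1 by rewrite /d (introF eqP e).
      move: cond; rewrite (introF eqP e) /= => /andP[h a'].
      by rewrite dE; have -> : i.+1 + (j - i).-1 = j by lia.
  - move=> k /andP[k0 kn]; rewrite /g'; case: ifP => h; apply: gS.
      by lia.
    have : d <= n by lia.
    by lia.
rewrite negb_exists => /forallP H.
have H' : forall i j, i <= n -> j <= n -> i < j ->
    g i != g j /\ (i.+1 < j -> ~~ adj (g i) (g j)).
  move=> i j ilt jlt ij.
  have := H (Ordinal (ilt : i < n.+1)); rewrite negb_exists => /forallP /(_ (Ordinal (jlt : j < n.+1))) /=.
  rewrite ij /= negb_or => /andP[-> h]; split => // h2.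
  by move: h; rewrite h2.
case: n IH g0 gn gadj gS H H' => [|[|m]] IH g0 gn gadj gS H H'.
- by move: nab; rewrite -g0 -gn eqxx.
- by move: nadj; rewrite -g0 -gn gadj.
exists (mkseq (fun k => g k.+1) m.+1).
have eP : a :: rcons (mkseq (fun k => g k.+1) m.+1) b = mkseq g m.+3.
  by rewrite mkseq_split g0 gn.
rewrite eP size_mkseq; split.
- by [].
- apply/mkseq_uniqP => i j; rewrite !inE => il jl e.
  case: (ltngtP i j) => // h.
    by have [ne _] := H' i j (ltnSE il) (ltnSE jl) h; rewrite e eqxx in ne.
  by have [ne _] := H' j i (ltnSE jl) (ltnSE il) h; rewrite e eqxx in ne.
- apply/allP => x /mapP [k]; rewrite mem_iota => /andP[_ kl] ->.
  by apply: gS; rewrite add0n in kl; lia.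
- apply/(pathP a) => i il; rewrite -[a :: _]/(a :: rcons _ b) eP.
  rewrite size_rcons size_mkseq in il.
  rewrite nth_mkseq; last lia.
  have -> : rcons (mkseq (fun k : nat => g k.+1) m.+1) b = mkseq (fun k => g k.+1) m.+2.
    by rewrite [RHS]mkseqS -gn.
  by rewrite nth_mkseq //; apply: gadj.
- move=> i j il jl; rewrite !nth_mkseq // => aij.
  case: (ltngtP i j) => h.
  + case: (ltnP i.+1 j) => h2; last by right; lia.
    by have [_ /(_ h2) /negP] := H' i j (ltnSE il) (ltnSE jl) h.
  + case: (ltnP j.+1 i) => h2; last by left; lia.
    by have [_ /(_ h2) /negP] := H' j i (ltnSE jl) (ltnSE il) h; rewrite adj_sym.
  + by move: aij; rewrite h adj_irr.
Qed.

Lemma next_cat_nth (T : eqType) (P r : seq T) x0 i :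
  uniq (P ++ r) -> i.+1 < size P -> next (P ++ r) (nth x0 P i) = nth x0 P i.+1.
Proof.
case: P => [//|p0 P] U il.
have iP : i < size (p0 :: P) by apply: ltnW.
rewrite next_nth.
have mem : nth x0 (p0 :: P) i \in (p0 :: P) ++ r by rewrite mem_cat mem_nth.
rewrite mem.
have -> : index (nth x0 (p0 :: P) i) ((p0 :: P) ++ r) = i.
  have -> : nth x0 (p0 :: P) i = nth x0 ((p0 :: P) ++ r) i by rewrite nth_cat iP.
  by rewrite index_uniq // size_cat; apply: leq_trans iP (leq_addr _ _).
rewrite /= nth_cat; move: il => /= il; rewrite ltnS in il; rewrite il.
by apply: set_nth_default.
Qed.

Lemma map_Some_pmap (T : Type) (s : seq (option T)) :
  all (fun o => if o is Some _ then true else false) s -> map Some (pmap id s) = s.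
Proof. by elim: s => [//|[a|] s IH] //= /IH ->. Qed.

Lemma in_pair3 (T : finType) (u v x y w : T) :
  x \in [set u; v] -> y \in [set u; v] -> x != y -> w \in [set u; v] ->
  w = x \/ w = y.
Proof.
rewrite !inE => /orP[]/eqP-> /orP[]/eqP-> //; rewrite ?eqxx // => ne /orP[]/eqP->;
  by auto.
Qed.

Lemma path_closed (T : Type) (e : rel T) (S : pred T) x p :
  S x -> (forall a b, S a -> e a b -> S b) -> path e x p -> all S (x :: p).
Proof.
move=> Sx cl; elim: p x Sx => [|y p IH] x Sx /=; first by rewrite Sx.
by move=> /andP[exy pp]; rewrite Sx; apply: IH => //; apply: cl exy.
Qed.

Lemma adj_minus_adj (G : sgraph) (X : {set G}) a b : adj_minus X a b -> adj a b.
Proof. by case/and3P. Qed.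

Lemma walk_of (G : sgraph) (X S : {set G}) a b a1 b1 :
  adj a a1 -> adj b1 b -> a1 \in S ->
  (forall z w, z \in S -> adj_minus X z w -> w \in S) ->
  connect (adj_minus X) a1 b1 -> exists n g, walk S a b n g.
Proof.
move=> aa1 b1b a1S cl /connectP [p pth eb1].
have allS : all (mem S) (a1 :: p) by apply: (path_closed (e := adj_minus X)).
have pa : path (@adj G) a1 p by apply: sub_path pth => z w; apply: adj_minus_adj.
exists (size p).+2, (nth a (a :: a1 :: rcons p b)); split.
- by [].
- by rewrite /= nth_rcons ltnn eqxx.
- have : path (@adj G) a (a1 :: rcons p b).
    by rewrite /= aa1 rcons_path pa -eb1 b1b.
  move/(pathP a) => H i il; apply: H; by rewrite /= size_rcons.
- move=> [//|k] /andP[_ kl] /=.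
  have kl' : k < size (a1 :: p) by [].
  rewrite -rcons_cons nth_rcons kl'; exact: (allP allS _ (mem_nth _ kl')).
Qed.


Lemma ar1 m n : m < n -> m.+1 < n.+2.
Proof. by move=> h; rewrite !ltnS ltnW. Qed.

Definition induced_q (G : sgraph) (D : {set G}) (x y : G) (q : seq G) :=
  [/\ q != [::], uniq (y :: rcons q x), all (mem D) q,
       path (@adj G) y (rcons q x) &
       forall i j, i < (size q).+2 -> j < (size q).+2 ->
         adj (nth y (y :: rcons q x) i) (nth y (y :: rcons q x) j) -> i = j.+1 \/ j = i.+1].

Lemma core2 (G : sgraph) (u v : G) (C D : {set G})
  (t : seq (ind_vert (C :|: [set u; v]))) :
  no_cycle_unique_chord G -> u != v -> ~~ adj u v ->
  (forall z, z \in D -> z \notin C :|: [set u; v]) ->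
  (forall z w, z \in D -> w \in C -> ~~ adj z w) ->
  (forall x y, x \in [set u; v] -> y \in [set u; v] -> x != y ->
     exists q, induced_q D x y q) ->
  is_cycle (rcons (map Some t) None : seq (clstar u v C)) ->
  #|chords (rcons (map Some t) None : seq (clstar u v C))| != 1.
Proof.
move=> HG uv nuv DX DC Qex cyc.
have [uc2 sc2 cc2] := and3P cyc.
have ut : uniq t by move: uc2; rewrite rcons_uniq map_inj_uniq; [case/andP | exact: Some_inj].
have st : 1 < size t by move: sc2; rewrite size_rcons size_map.
case: t ut st cyc uc2 sc2 cc2 => [//|t0 t'] ut st cyc uc2 sc2 cc2.
have [[pt hy] hx] : (path (@clstar_adj G u v C) (Some t0) (map Some t') /\
    clstar_adj (Some (last t0 t')) None) /\ @clstar_adj G u v C None (Some t0).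
  by move: cc2; rewrite /= !rcons_path last_rcons last_map => /andP[/andP[a b] c].
have pt' : path (@adj G) (val t0) (map val t') by rewrite path_map; rewrite path_map in pt.
have tl : t0 != last t0 t'.
  move: ut st; clear; case: t' => [//|t1 t''] /=.
  move=> /andP[nin _] _; apply: contraNneq nin => ->.
  by rewrite mem_last.
set x := val t0 in pt' hx; set y := val (last t0 t') in hy.
have xy : x != y by rewrite /x /y (inj_eq val_inj).
have [q [qn uq qD pq ind]] := Qex x y hx hy xy.
case: q qn uq qD pq ind => [//|q0 q''] _ uq qD pq ind.
set q := q0 :: q'' in uq qD pq ind *.
set t := t0 :: t' in ut st cyc uc2 sc2 cc2 *.
set c2 := (rcons (map Some t) None : seq (clstar u v C)).
set c' := map val t ++ q.
have valT : forall a : ind_vert (C :|: [set u; v]), val a \in C :|: [set u; v].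
  by move=> a; exact: (valP a).
have qD' : forall z, z \in q -> z \in D by move=> z zq; exact: (allP qD z zq).
have qT : forall z, z \in q -> z \notin map val t.
  move=> z /qD' /DX zn; apply/mapP => -[a _ e]; by move: zn; rewrite e valT.
have uc' : uniq c'.
  rewrite cat_uniq map_inj_uniq ?ut; last exact: val_inj.
  move: uq; rewrite cons_uniq rcons_uniq => /andP[_ /andP[_ ->]].
  rewrite andbT; apply/hasPn => z zq; exact: qT.
have cyc' : is_cycle c'.
  apply/and3P; split => //.
    rewrite size_cat size_map; have : size q = (size q'').+1 by [].
    by move=> ->; rewrite addnS ltnS; apply: leq_trans st (leq_addr _ _).
  rewrite /c' /t map_cons /= rcons_cat cat_path pt' last_map.
  exact: pq.
pose g (o : clstar u v C) : G := if o is Some a then val a else q0.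
have q0D : q0 \in D by apply: qD'; rewrite mem_head.
have gi : injective g.
  move=> [a|] [b|] //=; first by move/val_inj->.
    by move=> e; have := DX q0 q0D; rewrite -e valT.
  by move=> e; have := DX q0 q0D; rewrite e valT.
have nthS : forall a, a \in t -> Some a = nth None (map Some t) (index a t).
  by move=> a at'; rewrite (nth_map t0) ?index_mem // nth_index.
have nthV : forall a, a \in t -> val a = nth x (map val t) (index a t).
  by move=> a at'; rewrite (nth_map t0) ?index_mem // nth_index.
have uc2' : uniq (map Some t ++ [:: None]) by rewrite cats1.
have N2 : forall a, a \in t -> (index a t).+1 = size t -> next c2 (Some a) = None.
  move=> a at' ei.
  have il : index a t < size t by rewrite index_mem.
  have -> : Some a = nth None c2 (index a t) by rewrite /c2 nth_rcons size_map il -nthS.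
  have := @next_cat_nth _ c2 [::] None (index a t); rewrite cats0 => -> //; last first.
    by rewrite /c2 size_rcons size_map ei.
  by rewrite /c2 nth_rcons size_map ei ltnn eqxx.
have KEY : forall a b, a \in t -> b \in t ->
    (next c2 (Some a) == Some b) = (next c' (val a) == val b).
  move=> a b at' bt.
  have il : index a t < size t by rewrite index_mem.
  case: (ltnP (index a t).+1 (size t)) => h.
    rewrite (nthS a at') /c2 -cats1 next_cat_nth ?size_map //.
    rewrite (nthV a at') /c' next_cat_nth ?size_map //.
    by rewrite !(nth_map t0) // (inj_eq Some_inj) (inj_eq val_inj).
  have ei : (index a t).+1 = size t by apply/eqP; rewrite eqn_leq h il.
  rewrite (N2 a at' ei).
  have -> : val a = nth x (map val t ++ [:: q0]) (index a t).
    by rewrite nth_cat size_map il -nthV.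
  rewrite /c' -[q]/([:: q0] ++ q'') catA next_cat_nth; last first.
    - by rewrite size_cat size_map /= addn1 ei.
    - by rewrite -catA.
  rewrite nth_cat size_map ei ltnn subnn /=.
  apply/esym/negbTE; apply: contraNneq (qT q0 (mem_head _ _)) => ->.
  exact: map_f.
have N3 : next c2 None = Some t0.
  rewrite -(next_rotr 1 uc2) /c2 rotr1_rcons.
  have -> : None :: map Some t = [:: None; Some t0] ++ map Some t' by [].
  apply: (@next_cat_nth _ [:: None; Some t0] (map Some t') None 0) => //.
  by have := uc2; rewrite -(rotr_uniq 1) rotr1_rcons.
have [t1 [t2 et']] : exists t1 t2, t' = t1 :: t2.
  by move: st; rewrite /t; case: (t') => [//|t1 t2] _; exists t1, t2.
have [B eB] : exists B, rot (size B).+1 c' = (y :: rcons q x) ++ B.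
  exists (map val (belast t1 t2)).
  have -> : c' = (x :: map val (belast t1 t2)) ++ (y :: q).
    rewrite /c' /t /y /x et' /= -cat_rcons -map_rcons -lastI //.
  by rewrite -[(size _).+1]/(size (x :: map val (belast t1 t2))) rot_size_cat /= cat_rcons.
have N4 : forall z w, z \in q -> w \in c' -> adj z w ->
    (next c' z == w) || (next c' w == z).
  move=> z w zq wc a.
  have uc'' : uniq ((y :: rcons q x) ++ B) by rewrite -eB rot_uniq.
  rewrite -!(next_rot (size B).+1 uc') eB.
  set P := y :: rcons q x in uc'' *.
  have sP : size P = (size q).+2 by rewrite /P -[size (_ :: _)]/(size (rcons q x)).+1 size_rcons.
  have iq : index z q < size q by rewrite index_mem.
  have zP : z = nth y P (index z q).+1.
    have -> : nth y P (index z q).+1 = nth y (rcons q x) (index z q) by [].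
    by rewrite nth_rcons iq nth_index.
  have wP : w \in P.
    move: wc a; rewrite mem_cat => /orP[/mapP[b _ ->] | wq] a; last first.
      by rewrite /P in_cons mem_rcons in_cons wq !orbT.
    have := valT b; rewrite inE => /orP[bC | buv].
      by have := DC z (val b) (qD' z zq) bC; rewrite a.
    by case: (in_pair3 hx hy xy buv) => ->; rewrite /P in_cons mem_rcons in_cons eqxx ?orbT.
  have jl : index w P < size P by rewrite index_mem.
  have kl : (index z q).+1 < size P by rewrite sP; apply: ar1.
  have wP' : w = nth y P (index w P) by rewrite nth_index.
  move: a; rewrite zP wP' => a.
  have := ind _ _ _ _ a; rewrite -sP => /(_ kl jl) [e|e].
    by apply/orP; right; rewrite next_cat_nth // -e.
  by apply/orP; left; rewrite next_cat_nth // -e.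
have inc2 : forall a, a \in t -> Some a \in c2.
  by move=> a at'; rewrite /c2 mem_rcons in_cons map_f.
have inc2' : forall a, Some a \in c2 -> a \in t.
  by move=> a; rewrite /c2 mem_rcons in_cons /= -map_cons (mem_map Some_inj).
have lastt : last t0 t' \in t by rewrite /t mem_last.
have ilast : (index (last t0 t') t).+1 = size t by rewrite /t index_last.
have Nadj : forall a, a \in t -> val a \in [set u; v] ->
    (next c2 (Some a) == None) || (next c2 None == Some a).
  move=> a at' auv; case: (in_pair3 hx hy xy auv) => /val_inj ->.
    by rewrite N3 eqxx orbT.
  by rewrite N2 ?eqxx.
have E : chords c' = [set g @: Y | Y : {set clstar u v C} in chords c2].
  apply/setP => Y; apply/chordsP/imsetP.
  - move=> [z [w [zc wc a nn ->]]].
    have zq : z \notin q.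
      case: (boolP (z \in q)) => // zq; move: (N4 z w zq wc a) nn.
      by move=> /orP[h|h] /andP[h1 h2]; rewrite h in h1 h2.
    have wq : w \notin q.
      case: (boolP (w \in q)) => // wq; move: (N4 w z wq zc); rewrite adj_sym => /(_ a) nn2; move: nn2 nn.
      by move=> /orP[h|h] /andP[h1 h2]; rewrite h in h1 h2.
    move: zc wc a nn; rewrite /c' !mem_cat (negbTE zq) (negbTE wq) !orbF.
    move=> /mapP[a' at' ->] /mapP[b' bt' ->] a nn.
    exists [set Some a'; Some b']; last by rewrite set2_imset.
    apply/chordsP; exists (Some a'), (Some b'); split => //; try exact: inc2.
    by rewrite !KEY.
  - move=> [Y' /chordsP [o1 [o2 [o1c o2c a nn ->]]] ->].
    case: o1 o1c a nn => [a'|] o1c a nn; case: o2 o2c a nn => [b'|] o2c a nn //.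
    + have at' := inc2' _ o1c; have bt' := inc2' _ o2c.
      exists (val a'), (val b'); rewrite set2_imset; split => //;
        try by rewrite /c' mem_cat map_f.
      by rewrite -!KEY.
    + by move: nn; have := Nadj _ (inc2' _ o1c) a; case/orP => /eqP ->; rewrite eqxx ?andbF.
    + by move: nn; have := Nadj _ (inc2' _ o2c) a; case/orP => /eqP ->; rewrite eqxx ?andbF.
rewrite -(card_imset _ (imset_inj gi)) -E.
exact: HG c' cyc'.
Qed.


Lemma hered : hereditary no_cycle_unique_chord.
Proof.
move=> G S HG c cyc.
have [cyc' <-] := @map_cycle_chords (induced S) G val c val_inj (fun a b _ _ => erefl) cyc.
exact: HG _ cyc'.
Qed.

Lemma pair_cases (T : finType) (a b u v : T) :
  [set a; b] = [set u; v] -> a != b -> (a = u /\ b = v) \/ (a = v /\ b = u).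
Proof.
move=> e ab.
have ha : a \in [set u; v] by rewrite -e set21.
have hb : b \in [set u; v] by rewrite -e set22.
move: ha hb ab; rewrite !inE => /orP[]/eqP-> /orP[]/eqP-> ab;
  by [left; split | right; split | rewrite eqxx in ab].
Qed.

Lemma pair_set (T : finType) (u v x y : T) :
  u != v -> x \in [set u; v] -> y \in [set u; v] -> x != y -> [set y; x] = [set u; v].
Proof.
move=> uv; rewrite !inE => /orP[]/eqP-> /orP[]/eqP-> //; rewrite ?eqxx //.
by rewrite setUC.
Qed.

Lemma clstar_ok (G : sgraph) (u v : G) (C D : {set G}) (d : G) :
  no_cycle_unique_chord G -> u != v -> ~~ adj u v -> d \in D ->
  (forall z, z \in D -> z \notin C :|: [set u; v]) ->
  (forall z w, z \in D -> w \in C -> ~~ adj z w) ->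
  (forall x y, x \in [set u; v] -> y \in [set u; v] -> x != y ->
     exists q, induced_q D x y q) ->
  no_cycle_unique_chord (clstar u v C).
Proof.
move=> HG uv nuv dD DX DC Qex c cyc.
pose g (o : clstar u v C) : G := if o is Some a then val a else d.
have valT : forall a : ind_vert (C :|: [set u; v]), val a \in C :|: [set u; v].
  by move=> a; exact: (valP a).
have gi : injective g.
  move=> [a|] [b|] //=; first by move/val_inj->.
    by move=> e; have := DX d dD; rewrite -e valT.
  by move=> e; have := DX d dD; rewrite e valT.
case: (boolP (None \in c)) => Nc; last first.
  have [|cyc' <-] := map_cycle_chords gi _ cyc; last exact: HG _ cyc'.
  by move=> [a|] [b|] ac bc //; [rewrite bc in Nc | rewrite ac in Nc..].
case/rot_to: Nc => i s' ei.
have [cyc1 ch1] := rot_cycle_chords i cyc.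
rewrite ei in cyc1 ch1.
have [cyc2 ch2] := rot_cycle_chords 1 cyc1.
rewrite rot1_cons in cyc2 ch2.
rewrite -ch1 -ch2.
have noN : all (fun o : option (ind_vert (C :|: [set u; v])) =>
                  if o is Some _ then true else false) s'.
  move: (cyc2) => /and3P[u2 _ _]; move: u2; rewrite rcons_uniq => /andP[Ns _].
  by apply/allP => -[a|] //= Ns'; rewrite Ns' in Ns.
rewrite -(map_Some_pmap noN) in cyc2 *.
exact: core2 HG uv nuv DX DC Qex cyc2.
Qed.

Lemma cl_ok (G : sgraph) (u v : G) (C : {set G}) :
  no_cycle_unique_chord G -> u != v -> adj u v -> no_cycle_unique_chord (cl u v C).
Proof.
move=> HG uv auv c cyc.
have fa : forall a b : cl u v C, adj (val a) (val b) = adj a b.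
  move=> a b /=; rewrite /cl_adj.
  case: (boolP (adj (val a) (val b))) => h.
    rewrite orTb andbT; apply/esym/eqP => e; by rewrite e adj_irr in h.
  rewrite orFb; apply/esym/negbTE/andP => -[ne /eqP e].
  case: (pair_cases e ne) => -[ea eb]; move: h; rewrite ea eb ?auv //.
  by rewrite adj_sym auv.
have [cyc' <-] := @map_cycle_chords (cl u v C) G val c val_inj (fun a b _ _ => fa a b) cyc.
exact: HG _ cyc'.
Qed.

Theorem mainTheorem10 : two_cutset_safe no_cycle_unique_chord.
Proof.
split; first exact: hered.
move=> G HG no1 u v [uv [p1 [p2 [p1X p2X nconn]]]] C [x0 x0X defC].
have asym : symmetric (adj_minus [set u; v]).
  move=> a b; rewrite /adj_minus /= adj_sym; by case: (adj b a); case: (a \in [set u; v]); case: (b \in [set u; v]).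
have csym := sym_connect_sym asym.
have x0C : x0 \in C by rewrite defC inE x0X connect0.
have [d dX dC] : exists2 d, d \notin [set u; v] & d \notin C.
  case: (boolP (p1 \in C)) => h1; last by exists p1.
  case: (boolP (p2 \in C)) => h2; last by exists p2.
  move: h1 h2; rewrite defC !inE => /andP[_ c1] /andP[_ c2].
  by move: nconn; rewrite (connect_trans _ c2) // csym.
case: (boolP (adj u v)) => auv; first by left; apply: cl_ok.
right.
pose D := [set z | (z \notin [set u; v]) && connect (adj_minus [set u; v]) d z].
have dD : d \in D by rewrite inE dX connect0.
have DX' : forall z, z \in D -> z \notin [set u; v] by move=> z; rewrite inE => /andP[].
have DC0 : forall z, z \in D -> z \notin C.
  move=> z; rewrite !inE defC inE => /andP[zX dz]; apply/negP => /andP[_ x0z].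
  by move: dC; rewrite defC inE dX /= (connect_trans x0z) // csym.
have DX : forall z, z \in D -> z \notin C :|: [set u; v].
  by move=> z zD; rewrite in_setU negb_or DC0 // DX'.
have DC : forall z w, z \in D -> w \in C -> ~~ adj z w.
  move=> z w zD wC; apply/negP => a.
  have := DC0 z zD; rewrite defC inE (DX' z zD) /=.
  move: wC; rewrite defC inE => /andP[wX x0w].
  rewrite (connect_trans x0w) //; apply: connect1.
  by rewrite /adj_minus /= adj_sym a wX (DX' z zD).
have Dcl : forall z w, z \in D -> adj_minus [set u; v] z w -> w \in D.
  move=> z w zD zw; rewrite inE; move: zD; rewrite inE => /andP[_ dz].
  move: (zw) => /and3P[_ _ ->] /=.
  by rewrite (connect_trans dz) // connect1.
have Dconn : forall z w, z \in D -> w \in D -> connect (adj_minus [set u; v]) z w.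
  move=> z w; rewrite !inE => /andP[_ dz] /andP[_ dw].
  by rewrite (connect_trans _ dw) // csym.
have nbr : forall a b, [set a; b] = [set u; v] -> exists2 z, z \in D & adj a z.
  move=> a b eab.
  case: (boolP [exists z, (z \in D) && adj a z]) => [/existsP[z /andP[]] | H].
    by exists z.
  exfalso; apply: no1; exists b, d, x0; split.
  - by apply: contra dX; rewrite inE => /eqP ->; rewrite -eab set22.
  - by apply: contra x0X; rewrite inE => /eqP ->; rewrite -eab set22.
  apply/negP => /connectP [p pth ex0].
  have cl : forall z w, z \in D -> adj_minus [set b] z w -> w \in D.
    move=> z w zD /and3P[zw _ wb]; apply: (Dcl z) => //.
    rewrite /adj_minus /= zw (DX' z zD) /= -eab !inE negb_or.
    move: wb; rewrite inE => -> ; rewrite andbT.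
    apply/eqP => wa; move: H; rewrite negb_exists => /forallP /(_ z).
    by rewrite zD adj_sym -wa zw.
  have := path_closed (S := mem D) dD cl pth.
  move/allP => /(_ x0); rewrite ex0 mem_last => /(_ isT).
  by rewrite -ex0 => /DC0; rewrite x0C.
have Qex : forall x y, x \in [set u; v] -> y \in [set u; v] -> x != y ->
    exists q, induced_q D x y q.
  move=> x y hx hy xy.
  have eyx := pair_set uv hx hy xy.
  have exy : [set x; y] = [set u; v] by rewrite setUC.
  have [zy zyD ayz] := nbr y x eyx.
  have [zx zxD axz] := nbr x y exy.
  have [n [gw W]] := walk_of (X := [set u; v]) ayz (b := x) (b1 := zx)
    (eq_ind _ _ axz _ (adj_sym _ _)) zyD Dcl (Dconn _ _ zyD zxD).
  have nyx : ~~ adj y x.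
    case: (pair_cases eyx (negbT (introF eqP (fun e => (negP xy) (introT eqP (esym e))))))
      => -[-> ->] //; by rewrite adj_sym.
  have yx : y != x by rewrite eq_sym.
  exact: (induced_path yx nyx W).
exact: clstar_ok HG uv auv dD DX DC Qex.
Qed.
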